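(* In the SIS model under multi-layer Markovian mobility described in the context, with every generator matrix $Q^\alpha$ irreducible (every mobility digraph strongly connected), consider a solution with $\boldsymbol x(0)\gg\boldsymbol 0$ and $\boldsymbol p(0)\in[0,1]^{nm}$. If $p^\alpha_i(t)\to 0$ as $t\to\infty$ for some $i\in\{1,\dots,n\}$ and some $\alpha\in\{1,\dots,m\}$, then $\boldsymbol p(t)\to\boldsymbol 0$ as $t\to\infty$.
   Context: Setting: $n$ patches and $m$ classes. For each class $\alpha$, $Q^\alpha=(q^\alpha_{ij})$ is a continuous-time Markov chain generator on $\{1,\dots,n\}$ ($q^\alpha_{ij}\ge0$ for $i\ne j$ is the rate from $i$ to $j$, $q^\alpha_{ii}=-\sum_{j\ne i}q^\alpha_{ij}$). $x^\alpha_i>0$ is the number of class-$\alpha$ individuals at node $i$, $p^\alpha_i$ the infected fraction of class $\alpha$ at node $i$; $\boldsymbol x,\boldsymbol p\in\mathbb R^{nm}$ stack these class by class, and $P=\operatorname{diag}(\boldsymbol p)$. Node $i$ has infection rate $\beta_i>0$ and recovery rate $\delta_i\ge0$; $B$ and $D$ are $nm\times nm$ block-diagonal with $m$ identical blocks $\operatorname{diag}(\beta_1,\dots,\beta_n)$ and $\operatorname{diag}(\delta_1,\dots,\delta_n)$. $L(\boldsymbol x)$ is block-diagonal with blocks $L^\alpha(\boldsymbol x)$: $l^\alpha_{ii}=\sum_{j\ne i}q^\alpha_{ji}x^\alpha_j/x^\alpha_i$, $l^\alpha_{ij}=-q^\alpha_{ji}x^\alpha_j/x^\alpha_i$ ($i\ne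 j$). With $f^\alpha_i(\boldsymbol x)=x^\alpha_i/\sum_\gamma x^\gamma_i$, $F^\alpha=\operatorname{diag}(f^\alpha_1,\dots,f^\alpha_n)$, $\bar F=[F^1,\dots,F^m]$, $F(\boldsymbol x)$ is $m$ copies of $\bar F(\boldsymbol x)$ stacked vertically. Dynamics: $\dot{\boldsymbol p}=(BF(\boldsymbol x)-D-L(\boldsymbol x))\boldsymbol p-PBF(\boldsymbol x)\boldsymbol p$, $\dot{\boldsymbol x}^\alpha=(Q^\alpha)^\top\boldsymbol x^\alpha$. Componentwise, $\dot p^\alpha_i=-\delta_ip^\alpha_i+\beta_i\bar p_i(1-p^\alpha_i)-l^\alpha_{ii}p^\alpha_i-\sum_{j\ne i}l^\alpha_{ij}p^\alpha_j$ with $\bar p_i=\sum_\alpha f^\alpha_ip^\alpha_i$. *)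

(* Defs.v *)
From mathcomp Require Import all_boot all_order all_algebra.
From mathcomp Require Import all_classical all_reals all_analysis.
Set Implicit Arguments. Unset Strict Implicit. Unset Printing Implicit Defensive.
Import Order.TTheory GRing.Theory Num.Theory.
Import numFieldNormedType.Exports.
Local Open Scope classical_set_scope.
Local Open Scope ring_scope.

Definition generator (R : realType) (n : nat) (Q : 'M[R]_n) : Prop :=
  (forall i j : 'I_n, i != j -> 0 <= Q i j) /\
  (forall i : 'I_n, Q i i = - \sum_(j < n | j != i) Q i j).

Definition irreducible_gen (R : realType) (n : nat) (Q : 'M[R]_n) : Prop :=
  forall i j : 'I_n, connect (fun a b : 'I_n => (a != b) && (0 < Q a b)) i j.

(* States: x t a i = x^a_i(t), p t a i = p^a_i(t), classes a : 'I_m, nodes i : 'I_n. *)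

Definition frac (R : realType) (m n : nat) (x : 'I_m -> 'I_n -> R)
  (a : 'I_m) (i : 'I_n) : R := x a i / \sum_(g < m) x g i.

Definition pbar (R : realType) (m n : nat) (x p : 'I_m -> 'I_n -> R)
  (i : 'I_n) : R := \sum_(a < m) frac x a i * p a i.

Definition Lmat (R : realType) (m n : nat) (Q : 'I_m -> 'M[R]_n)
  (x : 'I_m -> 'I_n -> R) (a : 'I_m) (i j : 'I_n) : R :=
  if i == j then \sum_(k < n | k != i) Q a k i * x a k / x a i
  else - (Q a j i * x a j / x a i).

Definition p_rhs (R : realType) (m n : nat) (Q : 'I_m -> 'M[R]_n)
  (beta delta : 'I_n -> R) (x p : 'I_m -> 'I_n -> R) (a : 'I_m) (i : 'I_n) : R :=
  - delta i * p a i + beta i * pbar x p i * (1 - p a i)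
  - Lmat Q x a i i * p a i
  - \sum_(j < n | j != i) Lmat Q x a i j * p a j.

Definition x_rhs (R : realType) (m n : nat) (Q : 'I_m -> 'M[R]_n)
  (x : 'I_m -> 'I_n -> R) (a : 'I_m) (i : 'I_n) : R :=
  \sum_(j < n) Q a j i * x a j.

Definition is_solution (R : realType) (m n : nat) (Q : 'I_m -> 'M[R]_n)
  (beta delta : 'I_n -> R) (x p : R -> 'I_m -> 'I_n -> R) : Prop :=
  (forall a i, x s a i @[s --> 0^'+] --> x 0 a i) /\
  (forall a i, p s a i @[s --> 0^'+] --> p 0 a i) /\
  (forall (t : R) a i, 0 < t ->
     is_derive t 1 (fun s => x s a i) (x_rhs Q (x t) a i)) /\
  (forall (t : R) a i, 0 < t ->
     is_derive t 1 (fun s => p s a i) (p_rhs Q beta delta (x t) (p t) a i)).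

(* Main.v *)
Require Import Defs.
From mathcomp Require Import all_boot all_order all_algebra.
From mathcomp Require Import all_classical all_reals all_analysis.
From mathcomp Require Import ring lra.
Set Implicit Arguments. Unset Strict Implicit. Unset Printing Implicit Defensive.
Import Order.TTheory GRing.Theory Num.Theory.
Import numFieldNormedType.Exports.
Local Open Scope classical_set_scope.
Local Open Scope ring_scope.
Section S.
Variable R : realType.
Definition good (y D : R -> R) := y s @[s --> (0:R)^'+] --> y 0 /\ forall t : R, 0 < t -> is_derive t 1 y (D t).

Lemma good_cont y D (t : R) : good y D -> 0 < t -> {for t, continuous y}.
Proof.
move=> [_ hd] t0; have [dy _] := hd t t0.
by apply: differentiable_continuous; apply/derivable1_diffP.
Qed.

Lemma good_rc y D (t : R) : good y D -> 0 <= t -> y s @[s --> t^'+] --> y t.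
Proof.
move=> g; rewrite le_eqVlt => /orP[/eqP <-|t0]; first exact: g.1.
exact/cvg_at_right_filter/(good_cont g t0).
Qed.

Lemma good_lc y D (t : R) : good y D -> 0 < t -> y s @[s --> t^'-] --> y t.
Proof. by move=> g t0; exact/cvg_at_left_filter/(good_cont g t0). Qed.

Lemma good_within y D (a b : R) : good y D -> 0 <= a -> a < b -> {within `[a, b], continuous y}.
Proof.
move=> g a0 ab; apply/continuous_within_itvP => //; split.
- move=> s; rewrite in_itv /= => /andP[aS sb].
  exact: (good_cont g (le_lt_trans a0 aS)).
- exact: (good_rc g a0).
- exact: (good_lc g (le_lt_trans a0 ab)).
Qed.

Lemma right_gt y D (t c : R) : good y D -> 0 <= t -> c < y t ->
  exists2 e, 0 < e & forall s, t <= s < t + e -> c < y s.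
Proof.
move=> g t0 cy; have := cvgr_gt _ (good_rc g t0) c cy.
move=> [e /= e0 He]; exists e => // s /andP[ts tse].
move: ts; rewrite le_eqVlt => /orP[/eqP <- //|ts].
apply: He => //=; rewrite ltr0_norm ?subr_lt0 //; lra.
Qed.

Lemma left_lt y D (t c : R) : good y D -> 0 < t -> y t < c ->
  exists2 e, 0 < e & forall s, t - e < s <= t -> y s < c.
Proof.
move=> g t0 cy; have := cvgr_lt _ (good_lc g t0) c cy.
move=> [e /= e0 He]; exists e => // s /andP[ts tse].
move: tse; rewrite le_eqVlt => /orP[/eqP -> //|st].
apply: He => //=; rewrite gtr0_norm ?subr_gt0 //; lra.
Qed.

Lemma deriv_left (f : R -> R) (c e df : R) : 0 < e -> is_derive c 1 f df ->
  (forall s, c - e < s < c -> f c <= f s) -> df <= 0.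
Proof.
move=> e0 [fd <-] H.
rewrite ['D_1 f c]cvg_at_leftE; last exact: fd.
apply: limr_le.
  rewrite -(cvg_at_leftE (fun h => h^-1 *: ((f \o shift c) _ - f c))) //.
  apply: cvg_trans fd; apply: cvg_app.
  move=> A [r r0 Ar]; exists r => // x xe xgt0; apply: Ar => //.
  exact/ltr0_neq0.
near=> h; apply: mulr_le0_ge0.
  by rewrite invr_le0; apply: ltW; near: h; exists 1 => /=.
rewrite subr_ge0 [_%:A]mulr1 /=; apply: H.
have hn : h < 0. near: h. by exists 1 => //=.
have he : - e < h.
  near: h; exists e => //= x; rewrite /ball_ /= sub0r normrN => /ltr_normlP [] ? ? _; lra.
apply/andP; split; lra.
Unshelve. all: by end_near. Qed.

Lemma expd_derive (d t : R) : is_derive t 1 (fun s => expR (d * s)) (expR (d * t) * d).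
Proof.
have h1 : is_derive t 1 (fun s : R => d * s) d.
  have := is_deriveZ d (is_derive_id t (1:R)). rewrite /= scaler1 => H; exact: H.
exact: (is_derive1_comp (is_derive_expR (d*t)) h1).
Qed.

Lemma window (y D : R -> R) (s h d A : R) : 0 < d -> 0 < h ->
 (forall t, s < t < s + h -> is_derive t 1 y (D t)) ->
 {within `[s, s + h], continuous y} ->
 (forall t, s < t < s + h -> - d * y t + A <= D t) ->
 expR (- d * h) * (y s - A / d) <= y (s + h) - A / d.
Proof.
move=> d0 h0 dy cy hD.
pose g t := expR (d * t) * (y t - A / d).
pose dg t := expR (d * t) * (D t + d * y t - A).
have sh : s < s + h by rewrite ltrDl.
have [c cI E] : exists2 c, c \in `]s, s + h[ & g (s + h) - g s = dg c * (s + h - s).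
  apply: MVT => //.
    move=> t tI.
    have tI' : s < t < s + h by rewrite in_itv /= in tI.
    have H := is_deriveM (expd_derive d t) (is_deriveB (dy t tI') (is_derive_cst (A / d) t 1)).
    have -> : g = ((fun s => expR (d*s)) * (y - cst (A/d))) by apply/funext.
    apply: (is_derive_eq H).
    rewrite /dg subr0 /= /GRing.scale /=.
    have d0' : d != 0 by rewrite gt_eqF.
    rewrite !fctE. by field.
  move=> t; apply: (@continuousM _ (subspace `[s, s + h]) (fun s => expR (d*s)) (fun s => y s - A/d)).
    apply: continuous_subspaceT => z.
    apply: differentiable_continuous; apply/derivable1_diffP.
    by have [] := expd_derive d z.
  apply: continuousB; first exact: cy.
  exact: cst_continuous.
have cI' : s < c < s + h by rewrite in_itv /= in cI.
have : 0 <= dg c.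
  rewrite /dg mulr_ge0 ?expR_ge0 //.
  have := hD c cI'; lra.
move=> dg0.
have hh : s + h - s = h by ring.
rewrite hh in E.
have : g s <= g (s + h).
  rewrite -subr_ge0 E. by rewrite mulr_ge0 // ltW.
rewrite /g.
have e0 : 0 < expR (d * (s + h)) by apply: expR_gt0.
move=> H.
rewrite -(ler_pM2l e0) mulrA -expRD.
have -> : d * (s + h) + - d * h = d * s by ring.
exact: H.
Qed.

Lemma ex_derive (e a t : R) : is_derive t 1 (fun s => e * expR (a * s)) (e * (expR (a * t) * a)).
Proof. exact: (is_deriveZ e (expd_derive a t)). Qed.

Lemma good_add_exp y D (e a : R) : good y D ->
  good (fun s => y s + e * expR (a * s)) (fun s => D s + e * (expR (a * s) * a)).
Proof.
move=> [g0 gd]; split.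
  apply: cvgD => //.
  have [dy _] := ex_derive e a 0.
  have hc : {for 0, continuous (fun s : R => e * expR (a * s))}.
    by apply: differentiable_continuous; apply/derivable1_diffP.
  exact: (cvg_at_right_filter hc).
move=> t t0; exact: (is_deriveD (gd t t0) (ex_derive e a t)).
Qed.

Lemma fin_lower (I : finType) (Q : I -> R -> Prop) :
  (forall j (u v : R), 0 < u -> u <= v -> Q j v -> Q j u) ->
  (forall j, exists2 u, 0 < u & Q j u) -> exists2 u, 0 < u & forall j, Q j u.
Proof.
move=> mono ex.
suff [u u0 Hu] : exists2 u, 0 < u & forall j, j \in enum I -> Q j u.
  by exists u => // j; apply: Hu; rewrite mem_enum.
elim: (enum I) => [|j s [u u0 Hu]]; first by exists 1.
have [v v0 Hv] := ex j.
exists (Num.min u v); first by rewrite lt_min u0 v0.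
move=> k; rewrite inE => /orP[/eqP ->|ks].
  by apply: mono Hv; rewrite ?lt_min ?u0 ?v0 // ge_min lexx orbT.
by apply: mono (Hu k ks); rewrite ?lt_min ?u0 ?v0 // ge_min lexx.
Qed.

Lemma fin_upper (I : finType) (Q : I -> R -> Prop) :
  (forall j (u v : R), u <= v -> Q j u -> Q j v) ->
  (forall j, exists u, Q j u) -> exists u, forall j, Q j u.
Proof.
move=> mono ex.
suff [u Hu] : exists u, forall j, j \in enum I -> Q j u.
  by exists u => j; apply: Hu; rewrite mem_enum.
elim: (enum I) => [|j s [u Hu]]; first by exists 1.
have [v Hv] := ex j.
exists (Num.max u v).
move=> k; rewrite inE => /orP[/eqP ->|ks].
  by apply: mono Hv; rewrite le_max lexx orbT.
by apply: mono (Hu k ks); rewrite le_max lexx.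
Qed.

Lemma nonneg (I : finType) (y D : R -> I -> R) (K del : R) :
  0 <= K -> 0 < del ->
  (forall k, good (fun s => y s k) (fun s => D s k)) ->
  (forall k, 0 <= y 0 k) ->
  (forall t k, 0 < t -> (forall j, y t k <= y t j) -> - del < y t k -> y t k < 0 ->
     K * y t k <= D t k) ->
  forall t k, 0 <= t -> 0 <= y t k.
Proof.
move=> K0 d0 g y0 hD t k t0.
pose a := K + 1.
have a0 : 0 < a by rewrite /a; lra.
have key : forall e, 0 < e -> e * expR (a * t) < del ->
    forall j, 0 < y t j + e * expR (a * t).
  move=> e e0 edel.
  pose h j s := y s j + e * expR (a * s).
  have gh : forall j, good (h j) (fun s => D s j + e * (expR (a * s) * a)).
    by move=> j; apply: good_add_exp.
  move=> j0; rewrite ltNge; apply/negP => hj0.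
  pose Z := [set s | 0 <= s <= t /\ exists j, h j s <= 0].
  have Zt : Z t by split; [rewrite t0 lexx|exists j0].
  have Zlb : lbound Z 0 by move=> s [/andP[]].
  have Zne : nonempty Z by exists t.
  have Zhl : has_lbound Z by exists 0.
  have Zinf : has_inf Z by split.
  set t1 := inf Z.
  have t1ge0 : 0 <= t1 by apply: lb_le_inf.
  have t1le : t1 <= t by apply: ge_inf.
  have A : forall s j, 0 <= s -> s < t1 -> 0 < h j s.
    move=> s j s0 st1; rewrite ltNge; apply/negP => hs.
    have : Z s by split; [rewrite s0 /=; apply: ltW; apply: lt_le_trans st1 t1le|exists j].
    move/(ge_inf Zhl); lra.
  have B : exists j, h j t1 <= 0.
    apply/not_existsP => hall.
    have hpos : forall j, 0 < h j t1 by move=> j; rewrite ltNge; apply/negP/hall.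
    have [eta eta0 Heta] : exists2 eta, 0 < eta &
        forall j, forall s, t1 <= s < t1 + eta -> 0 < h j s.
      apply: fin_lower.
        move=> j u v u0 uv Hv s /andP[s1 s2]; apply: Hv; apply/andP; split => //; lra.
      move=> j; exact: (right_gt (gh j) t1ge0 (hpos j)).
    have [z Zz zlt] := inf_adherent eta0 Zinf.
    have t1z : t1 <= z by apply: ge_inf.
    case: Zz => _ [j hj].
    have := Heta j z; rewrite t1z zlt => /(_ isT); lra.
  have [k0 hk0] := B.
  have t1pos : 0 < t1.
    rewrite lt_neqAle t1ge0 andbT; apply/negP => /eqP t10.
    move: hk0; rewrite -t10 /h mulr0 expR0 mulr1; have := y0 k0; lra.
  have Dp : forall j, 0 <= h j t1.
    move=> j; rewrite leNgt; apply/negP => hneg.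
    have [eta eta0 Heta] := left_lt (gh j) t1pos hneg.
    pose s := t1 - Num.min eta t1 / 2.
    have m0 : 0 < Num.min eta t1 by rewrite lt_min eta0 t1pos.
    have m1 : Num.min eta t1 <= eta by rewrite ge_min lexx.
    have m2 : Num.min eta t1 <= t1 by rewrite ge_min lexx orbT.
    have := Heta s; rewrite /s.
    have -> : t1 - eta < t1 - Num.min eta t1 / 2 <= t1 by apply/andP; split; lra.
    move=> /(_ isT) hs.
    have := A (t1 - Num.min eta t1 / 2) j; lra.
  have hk : h k0 t1 = 0 by apply/eqP; rewrite eq_le hk0 Dp.
  set E0 := expR (a * t1).
  have E0pos : 0 < E0 by apply: expR_gt0.
  have E0le : E0 <= expR (a * t) by rewrite ler_expR ler_pM2l.
  have yk : y t1 k0 = - (e * E0) by move: hk; rewrite /h -/E0; lra.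
  have ymin : forall j, y t1 k0 <= y t1 j.
    move=> j; have := Dp j; rewrite /h -/E0 yk; lra.
  have eE0 : 0 < e * E0 by apply: mulr_gt0.
  have eE0' : e * E0 <= e * expR (a * t) by rewrite ler_pM2l.
  have hd := hD t1 k0 t1pos ymin.
  rewrite yk in hd.
  have := hd ltac:(lra) ltac:(lra) => hd'.
  have hder := deriv_left t1pos ((gh k0).2 t1 t1pos).
  have : D t1 k0 + e * (E0 * a) <= 0.
    apply: hder => s /andP[s1 s2]; rewrite hk; apply/ltW/A => //; lra.
  rewrite /a in hd' *; nra.
move=> {t0}; rewrite leNgt; apply/negP => ylt.
set E := expR (a * t) in key *.
have E0 : 0 < E by apply: expR_gt0.
pose e := Num.min (del / (2 * E)) (- y t k / (2 * E)).
have e0 : 0 < e by rewrite lt_min !divr_gt0 ?mulr_gt0 //; lra.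
have En : E != 0 by rewrite gt_eqF.
have e1 : e * E <= del / 2.
  have H : e * E <= del / (2 * E) * E by rewrite ler_pM2r // ge_min lexx.
  have -> : del / 2 = del / (2 * E) * E by field.
  exact: H.
have e2 : e * E <= - y t k / 2.
  have H : e * E <= - y t k / (2 * E) * E by rewrite ler_pM2r // ge_min lexx orbT.
  have -> : - y t k / 2 = - y t k / (2 * E) * E by field.
  exact: H.
have := key e e0 ltac:(lra) k; lra.
Qed.

End S.


Section S2.
Variable R : realType.
Lemma good_sum k (f df : 'I_k -> R -> R) : (forall i, good (f i) (df i)) ->
  good (fun s => \sum_(i < k) f i s) (fun s => \sum_(i < k) df i s).
Proof.
move=> g; split.
  apply: cvg_big => //; first exact: add_continuous.
  by move=> i _; exact: (g i).1.
move=> t t0.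
have H := @is_derive_sum _ _ _ k f t 1 (fun i => df i t) (fun i => (g i).2 t t0).
have -> : (fun s => \sum_(i < k) f i s) = \sum_(i < k) f i by apply/funext => s; rewrite fct_sumE.
exact: H.
Qed.

Lemma good_csub (y D : R -> R) (c : R) : good y D -> good (fun s => c - y s) (fun s => - D s).
Proof.
move=> [g0 gd]; split.
  by apply: cvgB => //; exact: cvg_cst.
move=> t t0; have := is_deriveB (is_derive_cst c t 1) (gd t t0).
rewrite sub0r => H.
have -> : (fun s => c - y s) = cst c - y by apply/funext.
exact: H.
Qed.

Lemma good_decay (v Dv : R -> R) (T K t w : R) : 0 < K -> 0 <= T -> good v Dv ->
  (forall s, T < s -> - K * v s <= Dv s) -> T <= t -> 0 <= w ->
  expR (- K * w) * v t <= v (t + w).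
Proof.
move=> K0 T0 g hD Tt; rewrite le_eqVlt => /orP[/eqP <-|w0].
  by rewrite mulr0 expR0 mul1r addr0.
have := @window R v Dv t w K 0 K0 w0.
rewrite !mul0r !subr0; apply.
- move=> s /andP[ts _]; apply: g.2; lra.
- by apply: good_within g _ _; [lra|rewrite ltrDl].
- move=> s /andP[ts _]; rewrite addr0; apply: hD; lra.
Qed.

Lemma prop (u v Du Dv : R -> R) (T K K' C : R) : 0 < K -> 0 < K' -> 0 < C -> 0 <= T ->
  good u Du -> good v Dv ->
  (forall t, T <= t -> 0 <= u t) -> (forall t, T <= t -> 0 <= v t) ->
  (forall t, T < t -> - K' * v t <= Dv t) ->
  (forall t, T < t -> - K * u t + C * v t <= Du t) ->
  u t @[t --> +oo] --> 0 -> v t @[t --> +oo] --> 0.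
Proof.
move=> K0 K'0 C0 T0 gu gv u0 v0 hv hu cu.
set e := expR (- K).
set e' := expR (- K').
have e0 : 0 < e by apply: expR_gt0.
have e'0 : 0 < e' by apply: expR_gt0.
have e1 : e < 1 by rewrite /e expR_lt1; lra.
set Z := K / (C * e' * (1 - e)).
have Z0 : 0 < Z by rewrite /Z divr_gt0 // !mulr_gt0 // subr_gt0.
have key : forall t, T <= t -> v t <= Z * u (t + 1).
  move=> t Tt.
  set A := C * e' * v t.
  have := @window R u Du t 1 K A K0 ltr01.
  have H1 : forall s, t < s < t + 1 -> is_derive s 1 u (Du s).
    move=> s /andP[ts _]; apply: gu.2; lra.
  have H2 : {within `[t, t + 1], continuous u}.
    by apply: good_within gu _ _; [lra|rewrite ltrDl].
  have H3 : forall s, t < s < t + 1 -> - K * u s + A <= Du s.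
    move=> s /andP[ts ts1]; apply: le_trans (hu s _); last lra.
    rewrite lerD2l /A -mulrA; apply: ler_wpM2l; first exact: ltW.
    have := good_decay K'0 T0 gv hv Tt (w := s - t) ltac:(lra).
    have -> : t + (s - t) = s by ring.
    apply: le_trans; rewrite ler_wpM2r //; first exact: v0.
    by rewrite /e' ler_expR; nra.
  move=> /(_ H1 H2 H3); rewrite mulr1 -/e => H.
  have ut0 := u0 t Tt.
  have hA : A / K * (1 - e) <= u (t + 1).
    have : 0 <= e * u t by rewrite mulr_ge0 // ltW.
    move: H; rewrite mulrBr; lra.
  have -> : v t = Z * (A / K * (1 - e)).
    rewrite /Z /A; field.
    by rewrite !gt_eqF // subr_gt0.
  by rewrite ler_wpM2l // ltW.
apply/cvgrPdist_lt => eps eps0.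
move/cvgrPdist_lt: cu => /(_ (eps / Z) (divr_gt0 eps0 Z0)) [M [Mr HM]].
exists (Num.max M T); split; first exact: num_real.
move=> t; rewrite gt_max => /andP[Mt Tt].
rewrite sub0r normrN ger0_norm; last by apply: v0; apply: ltW.
apply: le_lt_trans (key t (ltW Tt)) _.
have := HM (t + 1) ltac:(lra); rewrite sub0r normrN => h.
have := ler_norm (u (t + 1)).
rewrite -(ltr_pM2l Z0) in h.
have -> : eps = Z * (eps / Z) by field; rewrite gt_eqF.
move=> h2; apply: le_lt_trans h; rewrite ler_wpM2l //; exact: ltW.
Qed.
End S2.

Lemma oo_gt (R : realType) (a b s : R) : s \in `]a, b[ -> a < s.
Proof. by rewrite in_itv /= => /andP[]. Qed.
Lemma oo_lt (R : realType) (a b s : R) : s \in `]a, b[ -> s < b.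
Proof. by rewrite in_itv /= => /andP[]. Qed.

Section Main.
Variables (R : realType) (m n : nat) (Q : 'I_m -> 'M[R]_n) (beta delta : 'I_n -> R)
  (x p : R -> 'I_m -> 'I_n -> R).
Hypothesis gen : forall a, generator (Q a).
Hypothesis irr : forall a, irreducible_gen (Q a).
Hypothesis beta0 : forall i, 0 < beta i.
Hypothesis delta0 : forall i, 0 <= delta i.
Hypothesis sol : is_solution Q beta delta x p.
Hypothesis x0pos : forall a i, 0 < x 0 a i.
Hypothesis p0 : forall a i, 0 <= p 0 a i <= 1.

Lemma xgood a i : good (fun s => x s a i) (fun s => x_rhs Q (x s) a i).
Proof. by case: sol => h1 [h2 [h3 h4]]; split => // t t0; apply: h3. Qed.

Lemma pgood a i : good (fun s => p s a i) (fun s => p_rhs Q beta delta (x s) (p s) a i).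
Proof. by case: sol => h1 [h2 [h3 h4]]; split => // t t0; apply: h4. Qed.

Lemma offdiag a i j : i != j -> 0 <= Q a i j.
Proof. by move=> ij; case: (gen a) => h _; apply: h. Qed.

Lemma rowsum a i : \sum_(j < n) Q a i j = 0.
Proof.
case: (gen a) => _ h; rewrite (bigD1 i) //= h; apply/eqP; rewrite addrC subr_eq0.
by apply/eqP; apply: eq_bigl => j.
Qed.

Lemma colsum_bound : exists B, 0 <= B /\ forall a i, `|\sum_(j < n) Q a j i| <= B.
Proof.
have [u Hu] := @fin_upper R ('I_m * 'I_n)%type
  (fun k u => `|\sum_(j < n) Q k.1 j k.2| <= u)
  (fun k u v uv H => le_trans H uv) (fun k => ex_intro (fun u => `|\sum_(j < n) Q k.1 j k.2| <= u) _ (lexx _)).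
exists (Num.max u 0); split; first by rewrite le_max lexx orbT.
by move=> a i; apply: le_trans (Hu (a, i)) _; rewrite le_max lexx.
Qed.

Lemma xlow : exists c L, 0 < c /\ forall t a i, 0 <= t -> c * expR (- L * t) <= x t a i.
Proof.
have [c c0 Hc] := @fin_lower R ('I_m * 'I_n)%type
  (fun k u => u <= x 0 k.1 k.2) (fun k u v _ uv H => le_trans uv H)
  (fun k => ex_intro2 (fun u => 0 < u) (fun u => u <= x 0 k.1 k.2) _ (x0pos k.1 k.2) (lexx _)).
have [B [B0 HB]] := colsum_bound.
exists c, B; split => // t a i t0.
have := @nonneg R ('I_m * 'I_n)%type
  (fun s k => x s k.1 k.2 + (-c) * expR (- B * s))
  (fun s k => x_rhs Q (x s) k.1 k.2 + (-c) * (expR (- B * s) * - B)) B 1 B0 ltr01.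
move=> /(_ _ _ _ t (a, i) t0) /=.
have H : 0 <= x t a i + - c * expR (- B * t) -> c * expR (- B * t) <= x t a i by lra.
move=> Hn; apply: H; apply: Hn.
- by move=> k; apply: good_add_exp; apply: xgood.
- by move=> k; rewrite mulr0 expR0 mulr1; have := Hc k; lra.
move=> s [b j] s0 /= ymin _ ylt.
set E := c * expR (- B * s).
have E0 : 0 <= E by rewrite mulr_ge0 ?expR_ge0 // ltW.
have Xmin : forall j', x s b j <= x s b j'.
  move=> j'; have := ymin (b, j') => /=; lra.
have S1 : x s b j * \sum_(k < n) Q b k j <= x_rhs Q (x s) b j.
  rewrite mulr_sumr /x_rhs; apply: ler_sum => k _.
  case: (eqVneq k j) => [->|kj]; first by rewrite mulrC.
  by rewrite mulrC; apply: ler_wpM2l; [apply: offdiag|apply: Xmin].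
have HS := HB b j.
move: HS; set S := \sum_(k < n) Q b k j => HS.
have [HS1 HS2] : - B <= S /\ S <= B by move: HS; rewrite ler_norml => /andP[].
have -> : - c * (expR (- B * s) * - B) = E * B by rewrite /E; ring.
have eE : - c * expR (- B * s) = - E by rewrite /E; ring.
rewrite eE in ylt *.
rewrite -/S in S1.
set X := x s b j in ylt S1 *.
have h1 : (B - S) * (X - E) <= 0 by apply: mulr_ge0_le0; lra.
have h2 : 0 <= E * (B + S) by apply: mulr_ge0; lra.
nra.
Qed.

Lemma xpos t a i : 0 <= t -> 0 < x t a i.
Proof.
have [c [L [c0 H]]] := xlow => t0.
by apply: lt_le_trans (H t a i t0); rewrite mulr_gt0 ?expR_gt0.
Qed.

Lemma xrhs_sum a s : \sum_(i < n) x_rhs Q (x s) a i = 0.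
Proof.
rewrite /x_rhs exchange_big /=; apply: big1 => j _.
by rewrite -mulr_suml rowsum mul0r.
Qed.

Lemma mass a t : 0 <= t -> \sum_(i < n) x t a i = \sum_(i < n) x 0 a i.
Proof.
rewrite le_eqVlt => /orP[/eqP <- //|t0].
have g := good_sum (fun i => xgood a i).
have [c cI E] := @MVT R (fun s => \sum_(i < n) x s a i)
  (fun s => \sum_(i < n) x_rhs Q (x s) a i) 0 t t0
  (fun s sI => g.2 s (oo_gt sI)) (good_within g (lexx 0) t0).
by apply/eqP; rewrite -subr_eq0 E xrhs_sum mul0r.
Qed.


Lemma dbound : exists d, 0 < d /\ forall a k, - d <= Q a k k.
Proof.
have [u Hu] := @fin_upper R ('I_m * 'I_n)%type
  (fun k u => - Q k.1 k.2 k.2 <= u) (fun k u v uv H => le_trans H uv)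
  (fun k => ex_intro (fun u => - Q k.1 k.2 k.2 <= u) _ (lexx _)).
have [hm1 hm2] : u <= Num.max u 0 /\ 0 <= Num.max u 0 by rewrite !le_max !lexx orbT.
exists (Num.max u 0 + 1); split; first lra.
move=> a k; have := Hu (a, k) => /= h; lra.
Qed.

Lemma qbound : exists2 q, 0 < q & forall a j k, 0 < Q a j k -> q <= Q a j k.
Proof.
have ex : forall k : ('I_m * 'I_n * 'I_n)%type, exists2 u : R, 0 < u &
    (0 < Q k.1.1 k.1.2 k.2 -> u <= Q k.1.1 k.1.2 k.2).
  move=> k; case: (ltP 0 (Q k.1.1 k.1.2 k.2)) => h.
    by exists (Q k.1.1 k.1.2 k.2) => // _.
  by exists 1 => // h'; move: h h'; rewrite leNgt => /negP.
have [u u0 Hu] := @fin_lower R ('I_m * 'I_n * 'I_n)%type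
  (fun k u => 0 < Q k.1.1 k.1.2 k.2 -> u <= Q k.1.1 k.1.2 k.2)
  (fun k u v _ uv H h => le_trans uv (H h)) ex.
by exists u => // a j k; apply: (Hu (a, j, k)).
Qed.

Lemma dlow a k t d : 0 < t -> (forall a k, - d <= Q a k k) ->
  - d * x t a k <= x_rhs Q (x t) a k.
Proof.
move=> t0 hd; rewrite /x_rhs (bigD1 k) //=.
have h1 : - d * x t a k <= Q a k k * x t a k by rewrite ler_wpM2r ?hd // ltW ?xpos // ltW.
have h2 : 0 <= \sum_(l < n | l != k) Q a l k * x t a l.
  by apply: sumr_ge0 => l lk; rewrite mulr_ge0 ?offdiag // ltW ?xpos // ltW.
lra.
Qed.

Lemma dlow2 a j k t d : 0 < t -> (forall a k, - d <= Q a k k) -> j != k ->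
  - d * x t a k + Q a j k * x t a j <= x_rhs Q (x t) a k.
Proof.
move=> t0 hd jk; rewrite /x_rhs (bigD1 k) //= (bigD1 j) //=.
have h1 : - d * x t a k <= Q a k k * x t a k by rewrite ler_wpM2r ?hd // ltW ?xpos // ltW.
have h2 : 0 <= \sum_(l < n | (l != k) && (l != j)) Q a l k * x t a l.
  by apply: sumr_ge0 => l /andP[lk _]; rewrite mulr_ge0 ?offdiag // ltW ?xpos // ltW.
lra.
Qed.


Lemma xdecay d a k s w : 0 < d -> (forall a k, - d <= Q a k k) -> 0 <= s -> 0 <= w ->
  expR (- d * w) * x s a k <= x (s + w) a k.
Proof.
move=> d0 hd s0; rewrite le_eqVlt => /orP[/eqP <-|w0].
  by rewrite mulr0 expR0 mul1r addr0.
have := @window R (fun t => x t a k) (fun t => x_rhs Q (x t) a k) s w d 0 d0 w0.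
rewrite !mul0r !subr0; apply.
- move=> t /andP[st _]; apply: (xgood a k).2; lra.
- by apply: good_within (xgood a k) s0 _; rewrite ltrDl.
- move=> t /andP[st _]; rewrite addr0; apply: dlow => //; lra.
Qed.

Lemma xstep d q a j k s b : 0 < d -> (forall a k, - d <= Q a k k) -> 0 < q ->
  0 <= s -> 0 <= b -> b <= x s a j -> j != k -> q <= Q a j k ->
  (q * expR (- d) * (1 - expR (- d)) / d) * b <= x (s + 1) a k.
Proof.
move=> d0 hd q0 s0 b0 bx jk qQ.
set e := expR (- d).
have e0 : 0 < e by apply: expR_gt0.
set A := q * e * b.
have := @window R (fun t => x t a k) (fun t => x_rhs Q (x t) a k) s 1 d A d0 ltr01.
have H1 : forall t, s < t < s + 1 -> is_derive t 1 (fun t => x t a k) (x_rhs Q (x t) a k).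
  move=> t /andP[st _]; apply: (xgood a k).2; lra.
have H2 : {within `[s, s + 1], continuous (fun t => x t a k)}.
  by apply: good_within (xgood a k) s0 _; rewrite ltrDl.
have H3 : forall t, s < t < s + 1 -> - d * x t a k + A <= x_rhs Q (x t) a k.
  move=> t /andP[st ts]; apply: le_trans (dlow2 _ _ hd jk) => //; last lra.
  rewrite lerD2l.
  have xj : e * b <= x t a j.
    have := xdecay a j d0 hd s0 (w := t - s) ltac:(lra).
    have -> : s + (t - s) = t by ring.
    apply: le_trans.
    apply: le_trans (_ : expR (- d * (t - s)) * b <= _).
      by rewrite ler_wpM2r // ler_expR; nra.
    by rewrite ler_wpM2l ?expR_ge0.
  rewrite /A -mulrA; apply: ler_pM => //; first exact: ltW.
  by rewrite mulr_ge0 // ltW.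
move=> /(_ H1 H2 H3); rewrite mulr1 -/e => H.
have xk0 : 0 <= x s a k by apply/ltW/xpos.
have -> : q * e * (1 - e) / d * b = A / d - e * (A / d) by rewrite /A; field; rewrite gt_eqF.
have : e * x s a k >= 0 by rewrite mulr_ge0 // ltW.
move: H; rewrite mulrBr; lra.
Qed.


Lemma xpath d q g a (l : nat) : 0 < d -> (forall a k, - d <= Q a k k) -> 0 < q ->
  (forall a j k, 0 < Q a j k -> q <= Q a j k) -> 0 < g -> g <= expR (- d) ->
  g <= q * expR (- d) * (1 - expR (- d)) / d ->
  forall s j ps b, 0 <= s -> 0 <= b -> b <= x s a j ->
  path (fun u v : 'I_n => (u != v) && (0 < Q a u v)) j ps -> (size ps <= l)%N ->
  g ^+ l * b <= x (s + l%:R) a (last j ps).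
Proof.
move=> d0 hd q0 hq g0 ge1 ge2.
elim: l => [|l IH] s j ps b s0 b0 bx pa.
  by rewrite leqn0 => /nilP ->; rewrite expr0 mul1r addr0.
case: ps pa => [|v ps] /=.
  move=> _ _; have := IH s j [::] b s0 b0 bx isT isT => /= H.
  have := xdecay a j d0 hd (addr_ge0 s0 (ler0n _ l)) ler01.
  rewrite mulr1 -addrA natr1 exprS -mulrA => H2; apply: le_trans H2.
  apply: le_trans (_ : expR (- d) * (g ^+ l * b) <= _).
    by rewrite ler_wpM2r // mulr_ge0 // exprn_ge0 // ltW.
  by rewrite ler_wpM2l // expR_ge0.
move=> /andP[/andP[jv Qjv] pa] sz.
have H1 := xstep d0 hd q0 s0 b0 bx jv (hq a j v Qjv).
have H2 : g * b <= x (s + 1) a v.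
  apply: le_trans H1; rewrite ler_wpM2r //.
have := IH (s + 1) v ps (g * b) (addr_ge0 s0 ler01) (mulr_ge0 (ltW g0) b0) H2 pa sz.
have -> : s + l.+1%:R = s + 1 + l%:R by rewrite -natr1; ring.
by rewrite exprSr -mulrA.
Qed.


Lemma x_le_mass t a i : 0 <= t -> x t a i <= \sum_(j < n) x t a j.
Proof.
move=> t0; rewrite (bigD1 i) //= lerDl; apply: sumr_ge0 => j _; exact/ltW/xpos.
Qed.

Lemma xev : exists T c U, [/\ 0 <= T, 0 < c & forall t a i, T <= t -> c <= x t a i /\ x t a i <= U].
Proof.
have [U HU] := @fin_upper R 'I_m (fun a u => \sum_(j < n) x 0 a j <= u)
  (fun k u v uv H => le_trans H uv)
  (fun a => ex_intro (fun u => \sum_(j < n) x 0 a j <= u) _ (lexx _)).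
have Ub : forall t a i, 0 <= t -> x t a i <= U.
  by move=> t a i t0; rewrite (le_trans (x_le_mass a i t0)) // mass.
case: (posnP n) => [n0|npos].
  exists 0, 1, U; split => // t a i; have := ltn_ord i; by rewrite {2}n0.
pose i0 : 'I_n := Ordinal npos.
have Mpos : forall a, 0 < \sum_(j < n) x 0 a j.
  by move=> a; apply: lt_le_trans (x_le_mass a i0 (lexx 0)); apply: xpos.
have [Mm Mm0 HMm] := @fin_lower R 'I_m (fun a u => u <= \sum_(j < n) x 0 a j)
  (fun k u v _ uv H => le_trans uv H)
  (fun a => ex_intro2 (fun u => 0 < u) (fun u => u <= \sum_(j < n) x 0 a j) _ (Mpos a) (lexx _)).
have [d [d0 hd]] := dbound.
have [q q0 hq] := qbound.
set e := expR (- d).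
have e0 : 0 < e by apply: expR_gt0.
have e1 : e < 1 by rewrite /e expR_lt1; lra.
pose g := Num.min (q * e * (1 - e) / d) e.
have g0 : 0 < g by rewrite lt_min e0 andbT !mulr_gt0 ?invr_gt0 // subr_gt0.
have g1 : g <= e by rewrite ge_min lexx orbT.
have g2 : g <= q * e * (1 - e) / d by rewrite ge_min lexx.
have nR : 0 < n%:R :> R by rewrite ltr0n.
exists n%:R, (g ^+ n * (Mm / n%:R)), U; split.
- exact: ltW.
- by rewrite mulr_gt0 ?exprn_gt0 ?divr_gt0.
move=> t a i tn; split; last by apply: Ub; apply: le_trans tn; apply: ltW.
set s := t - n%:R.
have s0 : 0 <= s by rewrite /s subr_ge0.
set Ma := \sum_(j < n) x 0 a j.
have [j hj] : exists j, Ma / n%:R <= x s a j.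
  case: (pselect (exists j, Ma / n%:R <= x s a j)) => // nj.
  have lt : forall j, x s a j < Ma / n%:R.
    by move=> j; rewrite ltNge; apply/negP => hj; apply: nj; exists j.
  have : \sum_(j < n) x s a j < \sum_(j < n) Ma / n%:R.
    apply: ltr_sum => //; apply/hasP; exists i0 => //; exact: mem_index_enum.
  rewrite sumr_const card_ord mass // -/Ma.
  have -> : Ma / n%:R *+ n = Ma / n%:R * n%:R by rewrite mulr_natr.
  rewrite divfK ?gt_eqF //.
  by rewrite ltxx.
have /connectP [ps pa ->] := irr a j i.
case: (shortenP pa) => ps' pa' uq _.
have sz : (size ps' <= n)%N.
  move/card_uniqP: uq => /= eq.
  have := max_card (mem (j :: ps')); rewrite eq card_ord /=.
  by move/ltnW.
have := xpath d0 hd q0 hq g0 g1 g2 s0 (b := Mm / n%:R) _ _ pa' sz.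
rewrite /s subrK; apply.
- by rewrite divr_ge0 // ltW.
- apply: le_trans hj; rewrite ler_pM2r ?invr_gt0 //; exact: HMm.
Qed.


Lemma xsum_pos (t : R) (a : 'I_m) (i : 'I_n) : 0 <= t -> 0 < \sum_(g < m) x t g i.
Proof.
move=> t0; rewrite (bigD1 a) //=; apply: ltr_pwDl; first exact: xpos.
by apply: sumr_ge0 => g _; apply/ltW/xpos.
Qed.

Lemma frac_ge0 (t : R) (g : 'I_m) (i : 'I_n) : 0 <= t -> 0 <= Defs.frac (x t) g i.
Proof.
move=> t0; rewrite /Defs.frac divr_ge0 //; first exact/ltW/xpos.
exact/ltW/(xsum_pos g).
Qed.

Lemma frac_sum (t : R) (a : 'I_m) (i : 'I_n) : 0 <= t -> \sum_(g < m) Defs.frac (x t) g i = 1.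
Proof.
move=> t0; rewrite /Defs.frac -mulr_suml divff //; rewrite gt_eqF //; exact: xsum_pos a i t0.
Qed.

Lemma pbar_ge (t : R) (a : 'I_m) (i : 'I_n) (v : R) : 0 <= t -> (forall g, v <= p t g i) -> v <= pbar (x t) (p t) i.
Proof.
move=> t0 H.
have -> : v = \sum_(g < m) Defs.frac (x t) g i * v by rewrite -mulr_suml frac_sum // mul1r.
by apply: ler_sum => g _; rewrite ler_wpM2l ?frac_ge0.
Qed.

Lemma pbar_le (t : R) (a : 'I_m) (i : 'I_n) (w : R) : 0 <= t -> (forall g, p t g i <= w) -> pbar (x t) (p t) i <= w.
Proof.
move=> t0 H.
have -> : w = \sum_(g < m) Defs.frac (x t) g i * w by rewrite -mulr_suml frac_sum // mul1r.
by apply: ler_sum => g _; rewrite ler_wpM2l ?frac_ge0.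
Qed.

Lemma prhs_id (t : R) (a : 'I_m) (i : 'I_n) : p_rhs Q beta delta (x t) (p t) a i =
  - delta i * p t a i + beta i * pbar (x t) (p t) i * (1 - p t a i)
  + \sum_(j < n | j != i) (Q a j i * x t a j / x t a i) * (p t a j - p t a i).
Proof.
have E1 : \sum_(j < n | j != i) Lmat Q (x t) a i j * p t a j =
    - \sum_(j < n | j != i) Q a j i * x t a j / x t a i * p t a j.
  rewrite -sumrN; apply: eq_bigr => j ji.
  by rewrite /Lmat eq_sym (negbTE ji) mulNr.
have E2 : Lmat Q (x t) a i i = \sum_(j < n | j != i) Q a j i * x t a j / x t a i.
  by rewrite /Lmat eqxx.
rewrite /p_rhs E1 E2.
under [X in _ = _ + X]eq_bigr do rewrite mulrBr.
have E3 : \sum_(j < n | j != i) Q a j i * x t a j / x t a i * p t a i = (\sum_(j < n | j != i) Q a j i * x t a j / x t a i) * p t a i by rewrite mulr_suml.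
rewrite sumrB E3; ring.
Qed.

Lemma r_ge0 (t : R) (a : 'I_m) (i j : 'I_n) : 0 <= t -> j != i -> 0 <= Q a j i * x t a j / x t a i.
Proof.
move=> t0 ji; rewrite divr_ge0 ?mulr_ge0 ?offdiag //; exact/ltW/xpos.
Qed.


Lemma betabound : exists bm, 0 <= bm /\ forall i, beta i <= bm.
Proof.
have [u Hu] := @fin_upper R 'I_n (fun i u => beta i <= u) (fun k u v uv H => le_trans H uv)
  (fun i => ex_intro (fun u => beta i <= u) _ (lexx _)).
exists (Num.max u 0); split; first by rewrite le_max lexx orbT.
by move=> i; apply: le_trans (Hu i) _; rewrite le_max lexx.
Qed.

Lemma pinv t a i : 0 <= t -> 0 <= p t a i <= 1.
Proof.
move=> t0.
have [bm [bm0 hbm]] := betabound.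
have := @nonneg R ('I_m * 'I_n * bool)%type
  (fun s k => if k.2 then p s k.1.1 k.1.2 else 1 - p s k.1.1 k.1.2)
  (fun s k => if k.2 then p_rhs Q beta delta (x s) (p s) k.1.1 k.1.2
              else - p_rhs Q beta delta (x s) (p s) k.1.1 k.1.2) (2 * bm) 1 ltac:(lra) ltr01.
move=> H.
have H' : forall k, 0 <= t -> 0 <= (if k.2 then p t k.1.1 k.1.2 else 1 - p t k.1.1 k.1.2).
  move=> k; apply: H.
  - by move=> [[b j] []] /=; [apply: pgood|apply: good_csub; apply: pgood].
  - by move=> [[b j] []] /=; have := p0 b j; lra.
  move=> s [[b j] c] s0 /= ymin ylo yhi.
  have lo : forall g l, (if c then p s b j else 1 - p s b j) <= p s g l.
    by move=> g l; have := ymin (g, l, true).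
  have hi : forall g l, (if c then p s b j else 1 - p s b j) <= 1 - p s g l.
    by move=> g l; have := ymin (g, l, false).
  have s0' : 0 <= s by apply: ltW.
  have bj1 := hbm j; have bj0 := beta0 j; have dj := delta0 j.
  move: ymin ylo yhi lo hi; case: c => /= _ ylo yhi lo hi; rewrite prhs_id.
  + have pb1 : p s b j <= pbar (x s) (p s) j by apply: (pbar_ge b) => // g; apply: lo.
    have S : 0 <= \sum_(l < n | l != j) Q b l j * x s b l / x s b j * (p s b l - p s b j).
      apply: sumr_ge0 => l lj; apply: mulr_ge0; first exact: r_ge0.
      rewrite subr_ge0; exact: lo.
    set P := p s b j in ylo yhi pb1 S *.
    set PB := pbar (x s) (p s) j in pb1 *.
    have h1 : 0 <= - delta j * P by nra.
    have h2 : beta j * P * (1 - P) <= beta j * PB * (1 - P).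
      by rewrite ler_wpM2r ?ler_wpM2l //; lra.
    have k1 : beta j * (1 - P) <= 2 * bm.
      have : beta j * (1 - P) <= beta j * 2 by rewrite ler_wpM2l //; [apply: ltW|lra].
      lra.
    have h3 : 2 * bm * P <= beta j * P * (1 - P).
      have := ler_wnM2l (ltW yhi) k1.
      have -> : beta j * P * (1 - P) = P * (beta j * (1 - P)) by ring.
      by rewrite [2 * bm * P]mulrC.
    lra.
  + have S : \sum_(l < n | l != j) Q b l j * x s b l / x s b j * (p s b l - p s b j) <= 0.
      rewrite -oppr_ge0 -sumrN; apply: sumr_ge0 => l lj; rewrite -mulrN; apply: mulr_ge0.
        exact: r_ge0.
      have := hi b l; lra.
    set P := p s b j in ylo yhi S *.
    set PB := pbar (x s) (p s) j.
    have h1 : 0 <= delta j * P by nra.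
    have pbv : 1 - P <= PB.
      apply: (pbar_ge b) => // g; have := lo g j; lra.
    have hP0 : 1 - P <= 0 by lra.
    have h2 : beta j * PB * (1 - P) <= beta j * (1 - P) * (1 - P).
      rewrite -!mulrA; apply: ler_wpM2l; first exact: ltW.
      exact: (ler_wnM2r hP0 pbv).
    have k1 : - (beta j * (1 - P)) <= 2 * bm.
      have : beta j * (P - 1) <= beta j * 1 by rewrite ler_wpM2l //; [apply: ltW|lra].
      have -> : - (beta j * (1 - P)) = beta j * (P - 1) by ring.
      lra.
    have h3 : 2 * bm * (1 - P) <= - (beta j * (1 - P) * (1 - P)).
      have hP : 1 - P <= 0 by lra.
      have := ler_wnM2l hP k1.
      have -> : - (beta j * (1 - P) * (1 - P)) = (1 - P) * (- (beta j * (1 - P))) by ring.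
      by rewrite mulrC.
    lra.
have := H' (a, i, true) t0; have := H' (a, i, false) t0 => /=; lra.
Qed.


Section Ev.
Variables (T c U : R).
Hypothesis T0 : 0 <= T.
Hypothesis c0 : 0 < c.
Hypothesis hx : forall t a i, T <= t -> c <= x t a i /\ x t a i <= U.

Definition Kp (a : 'I_m) (i : 'I_n) := delta i + (\sum_(j < n | j != i) Q a j i) * (U / c) + 1.


Lemma plow a i t : T < t ->
  - Kp a i * p t a i + (beta i * pbar (x t) (p t) i * (1 - p t a i)
    + \sum_(j < n | j != i) (Q a j i * x t a j / x t a i) * p t a j)
  <= p_rhs Q beta delta (x t) (p t) a i.
Proof.
move=> Tt; have t0 : 0 <= t by apply: le_trans T0 (ltW Tt).
rewrite prhs_id.
under [X in _ <= _ + X]eq_bigr do rewrite mulrBr.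
rewrite sumrB -mulr_suml.
have pi0 := (pinv a i t0); case/andP: pi0 => pi0 pi1.
have [ci Ui] := hx a i (ltW Tt).
have Hr : \sum_(j < n | j != i) Q a j i * x t a j / x t a i
          <= (\sum_(j < n | j != i) Q a j i) * (U / c).
  rewrite mulr_suml; apply: ler_sum => j ji.
  rewrite -mulrA; apply: ler_wpM2l; first exact: offdiag.
  have [cj Uj] := hx a j (ltW Tt).
  have xi0 : 0 < x t a i by apply: lt_le_trans ci.
  rewrite ler_pdivrMr // mulrAC ler_pdivlMr //.
  apply: ler_pM => //; [exact/ltW/xpos|exact: ltW].
have : (\sum_(j < n | j != i) Q a j i * x t a j / x t a i) * p t a i
       <= (\sum_(j < n | j != i) Q a j i) * (U / c) * p t a i by rewrite ler_wpM2r.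
rewrite /Kp.
have : 0 <= delta i * p t a i by rewrite mulr_ge0.
lra.
Qed.


Lemma cU (a : 'I_m) (i : 'I_n) : c <= U.
Proof. by have [h1 h2] := hx a i (lexx T); apply: le_trans h2. Qed.

Lemma Kp_pos (a : 'I_m) (i : 'I_n) : 0 < Kp a i.
Proof.
rewrite /Kp; have := delta0 i; have := cU a i => h.
have : 0 <= (\sum_(j < n | j != i) Q a j i) * (U / c).
  rewrite mulr_ge0 ?divr_ge0 //; last exact: ltW.
    by apply: sumr_ge0 => j ji; apply: offdiag.
  apply: le_trans h; exact: ltW.
lra.
Qed.

Lemma extra_ge0 (a : 'I_m) (i : 'I_n) (t : R) : 0 <= t ->
  0 <= \sum_(j < n | j != i) (Q a j i * x t a j / x t a i) * p t a j.
Proof.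
move=> t0; apply: sumr_ge0 => j ji; apply: mulr_ge0; first exact: r_ge0.
by case/andP: (pinv a j t0).
Qed.

Lemma pdec (a : 'I_m) (i : 'I_n) (t : R) : T < t -> - Kp a i * p t a i <= p_rhs Q beta delta (x t) (p t) a i.
Proof.
move=> Tt; have t0 : 0 <= t by apply: le_trans T0 (ltW Tt).
apply: le_trans _ (plow a i Tt); rewrite lerDl.
apply: addr_ge0; last exact: extra_ge0.
have [pi0 pi1] := andP (pinv a i t0).
rewrite mulr_ge0 ?subr_ge0 // mulr_ge0 //; first exact/ltW/beta0.
by apply: (pbar_ge a) => // g; case/andP: (pinv g i t0).
Qed.

Lemma U0 (a : 'I_m) (i : 'I_n) : 0 < U.
Proof. exact: lt_le_trans c0 (cU a i). Qed.

Lemma pedge (a : 'I_m) (i j : 'I_n) (t : R) : T < t -> j != i ->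
  - Kp a i * p t a i + (Q a j i * (c / U)) * p t a j <= p_rhs Q beta delta (x t) (p t) a i.
Proof.
move=> Tt ji; have t0 : 0 <= t by apply: le_trans T0 (ltW Tt).
apply: le_trans _ (plow a i Tt); rewrite lerD2l.
have [pi0 pi1] := andP (pinv a i t0).
have [pj0 pj1] := andP (pinv a j t0).
have h1 : 0 <= beta i * pbar (x t) (p t) i * (1 - p t a i).
  rewrite mulr_ge0 ?subr_ge0 // mulr_ge0 //; first exact/ltW/beta0.
  by apply: (pbar_ge a) => // g; case/andP: (pinv g i t0).
have h3 : Q a j i * x t a j / x t a i * p t a j <=
    \sum_(l < n | l != i) Q a l i * x t a l / x t a i * p t a l.
  rewrite (bigD1 j) //= -[X in X <= _]addr0 lerD2l.
  apply: sumr_ge0 => l /andP[li _]; apply: mulr_ge0; first exact: r_ge0.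
  by case/andP: (pinv a l t0).
have h2 : Q a j i * (c / U) * p t a j <= Q a j i * x t a j / x t a i * p t a j.
  apply: ler_wpM2r => //; rewrite -mulrA; apply: ler_wpM2l; first exact: offdiag.
  have [cj Uj] := hx a j (ltW Tt).
  have [ci Ui] := hx a i (ltW Tt).
  have xi0 : 0 < x t a i by apply: lt_le_trans ci.
  rewrite ler_pdivrMr ?(U0 a i) // mulrAC ler_pdivlMr //.
  by apply: ler_pM => //; exact: ltW.
lra.
Qed.

Lemma pnode (a : 'I_m) (i : 'I_n) (g : 'I_m) (t : R) : T < t -> p t a i <= 1 / 2 ->
  - Kp a i * p t a i + (beta i * (c / (m%:R * U)) / 2) * p t g i
  <= p_rhs Q beta delta (x t) (p t) a i.
Proof.
move=> Tt ph; have t0 : 0 <= t by apply: le_trans T0 (ltW Tt).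
apply: le_trans _ (plow a i Tt); rewrite lerD2l.
have [pi0 pi1] := andP (pinv a i t0).
have [pg0 pg1] := andP (pinv g i t0).
have h0 := extra_ge0 a i t0.
have hpb : Defs.frac (x t) g i * p t g i <= pbar (x t) (p t) i.
  rewrite /pbar (bigD1 g) //= -[X in X <= _]addr0 lerD2l.
  apply: sumr_ge0 => h _; rewrite mulr_ge0 ?frac_ge0 //.
  by case/andP: (pinv h i t0).
have hf : c / (m%:R * U) <= Defs.frac (x t) g i.
  have [cg Ug] := hx g i (ltW Tt).
  have S0 := xsum_pos g i t0.
  have Sle : \sum_(h < m) x t h i <= m%:R * U.
    have -> : m%:R * U = \sum_(h < m) U by rewrite sumr_const card_ord mulr_natl.
    by apply: ler_sum => h _; have [] := hx h i (ltW Tt).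
  have mU : 0 < m%:R * U by apply: lt_le_trans S0 Sle.
  rewrite /Defs.frac ler_pdivrMr // mulrAC ler_pdivlMr //.
  by apply: ler_pM => //; exact: ltW.
have b0 := beta0 i.
have h1 : c / (m%:R * U) * p t g i <= pbar (x t) (p t) i.
  by apply: le_trans hpb; rewrite ler_wpM2r.
have h2 : beta i * (c / (m%:R * U)) * p t g i <= beta i * pbar (x t) (p t) i.
  by rewrite -mulrA ler_wpM2l // ltW.
have h3 : beta i * pbar (x t) (p t) i / 2 <= beta i * pbar (x t) (p t) i * (1 - p t a i).
  rewrite ler_wpM2l //; last lra.
  rewrite mulr_ge0 //; first exact: ltW.
  by apply: (pbar_ge a) => // h; case/andP: (pinv h i t0).
have -> : beta i * (c / (m%:R * U)) / 2 * p t g i = beta i * (c / (m%:R * U)) * p t g i / 2 by ring.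
lra.
Qed.


Lemma conv_edge (a : 'I_m) (i j : 'I_n) : j != i -> 0 < Q a j i ->
  p t a i @[t --> +oo] --> 0 -> p t a j @[t --> +oo] --> 0.
Proof.
move=> ji Q0.
have C0 : 0 < Q a j i * (c / U) by rewrite mulr_gt0 // divr_gt0 // (U0 a i).
apply: (@prop R (fun t => p t a i) (fun t => p t a j)
  (fun t => p_rhs Q beta delta (x t) (p t) a i)
  (fun t => p_rhs Q beta delta (x t) (p t) a j) T (Kp a i) (Kp a j) _
  (Kp_pos a i) (Kp_pos a j) C0 T0 (pgood a i) (pgood a j)).
- by move=> t Tt; case/andP: (pinv a i (le_trans T0 Tt)).
- by move=> t Tt; case/andP: (pinv a j (le_trans T0 Tt)).
- by move=> t Tt; apply: pdec.
- by move=> t Tt; apply: pedge.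
Qed.

Lemma conv_node (a : 'I_m) (i : 'I_n) (g : 'I_m) :
  p t a i @[t --> +oo] --> 0 -> p t g i @[t --> +oo] --> 0.
Proof.
move=> H.
have := H; move/cvgrPdist_lt => /(_ (1 / 2) ltac:(lra)) [M [Mr HM]].
set T' := Num.max T M.
have T'0 : 0 <= T' by rewrite le_max T0.
have TT' : T <= T' by rewrite le_max lexx.
have MT' : M <= T' by rewrite le_max lexx orbT.
have m0 : 0 < m%:R :> R by rewrite ltr0n; apply: leq_ltn_trans (ltn_ord a).
have C0 : 0 < beta i * (c / (m%:R * U)) / 2.
  by rewrite !mulr_gt0 ?invr_gt0 ?mulr_gt0 // (U0 a i).
apply: (@prop R (fun t => p t a i) (fun t => p t g i)
  (fun t => p_rhs Q beta delta (x t) (p t) a i)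
  (fun t => p_rhs Q beta delta (x t) (p t) g i) T' (Kp a i) (Kp g i) _
  (Kp_pos a i) (Kp_pos g i) C0 T'0 (pgood a i) (pgood g i)) => //.
- by move=> t Tt; case/andP: (pinv a i (le_trans T'0 Tt)).
- by move=> t Tt; case/andP: (pinv g i (le_trans T'0 Tt)).
- by move=> t Tt; apply: pdec; apply: le_lt_trans Tt.
- move=> t Tt; apply: pnode; first exact: le_lt_trans Tt.
  have := HM t (le_lt_trans MT' Tt); rewrite sub0r normrN => /ltW h.
  by apply: le_trans (ler_norm _) h.
Qed.

End Ev.

Lemma final : (exists (a : 'I_m) (i : 'I_n), p t a i @[t --> +oo] --> 0) ->
  forall (a : 'I_m) (i : 'I_n), p t a i @[t --> +oo] --> 0.
Proof.
move=> [a0 [i0 H0]] a i.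
have [T [c [U [T0 c0 hx]]]] := xev.
have Ha : p t a i0 @[t --> +oo] --> 0 by apply: conv_node T0 c0 hx a0 i0 a H0.
have /connectP [ps pa E] := irr a i i0.
rewrite E in Ha.
elim: ps i pa Ha {E} => [|v ps IH] j //= /andP[/andP[jv Qjv] pa] Hl.
apply: (conv_edge T0 c0 hx jv Qjv).
exact: IH.
Qed.

End Main.




Theorem lemma1 (R : realType) (m n : nat) (Q : 'I_m -> 'M[R]_n)
  (beta delta : 'I_n -> R) (x p : R -> 'I_m -> 'I_n -> R) :
  (forall a, generator (Q a)) ->
  (forall a, irreducible_gen (Q a)) ->
  (forall i, 0 < beta i) ->
  (forall i, 0 <= delta i) ->
  is_solution Q beta delta x p ->
  (forall a i, 0 < x 0 a i) ->
  (forall a i, 0 <= p 0 a i <= 1) ->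
  (exists (a : 'I_m) (i : 'I_n), p t a i @[t --> +oo] --> 0) ->
  forall (a : 'I_m) (i : 'I_n), p t a i @[t --> +oo] --> 0.
Proof.
move=> gen irr b0 d0 sol x0 p0 H.
exact: (final gen irr b0 d0 sol x0 p0 H).
Qed.
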